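(* Let $E$ be a graph such that any two boundary paths of $E$ are shift-tail equivalent. Then every nonempty saturated hereditary subset of $E^0$ is equal to $E^0$.
   Context: A graph $E=(E^0,E^1,r,s)$ has vertex set $E^0$, edge set $E^1$, range and source maps. A vertex is singular if it emits no edges or infinitely many edges, regular otherwise. $H\subseteq E^0$ is hereditary if $s(e)\in H$ implies $r(e)\in H$ for every $e\in E^1$; it is saturated if every regular vertex $v$ with $r(s^{-1}(v))\subseteq H$ lies in $H$. Boundary paths: infinite paths $e_1e_2\cdots$ ($r(e_i)=s(e_{i+1})$) together with finite paths (including vertices as length-$0$ paths) whose range is singular. The shift $\sigma_E$ removes the first edge (fixes vertices; sends a single edge $e$ to $r(e)$); boundary paths $\alpha,\beta$ are shift-tail equivalent if $\sigma_E^m(\alpha)=\sigma_E^n(\beta)$ for some $m,n\in\mathbb{N}$. *)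

(* Defs.v *)
From Stdlib Require Import List.
Import ListNotations.

Section Graph.
Context {V Ed : Type} (r s : Ed -> V).

Definition emits_finitely (v : V) : Prop :=
  exists l : list Ed, forall e, s e = v -> In e l.

Definition singular (v : V) : Prop :=
  (forall e, s e <> v) \/ ~ emits_finitely v.

Definition regular (v : V) : Prop := ~ singular v.

Definition hereditary (H : V -> Prop) : Prop :=
  forall e, H (s e) -> H (r e).

Definition saturated (H : V -> Prop) : Prop :=
  forall v, regular v -> (forall e, s e = v -> H (r e)) -> H v.

(* Candidate paths: a vertex (length 0), a nonempty finite edge sequence
   e :: l, or an infinite edge sequence f 0, f 1, ... *)
Inductive gpath : Type :=
  | PVert : V -> gpath
  | PFin : Ed -> list Ed -> gpath
  | PInf : (nat -> Ed) -> gpath.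

Fixpoint chain (e : Ed) (l : list Ed) : Prop :=
  match l with
  | [] => True
  | e' :: l' => r e = s e' /\ chain e' l'
  end.

Definition is_boundary_path (p : gpath) : Prop :=
  match p with
  | PVert v => singular v
  | PFin e l => chain e l /\ singular (r (last l e))
  | PInf f => forall n, r (f n) = s (f (S n))
  end.

Definition shift (p : gpath) : gpath :=
  match p with
  | PVert v => PVert v
  | PFin e [] => PVert (r e)
  | PFin _ (e' :: l) => PFin e' l
  | PInf f => PInf (fun n => f (S n))
  end.

Definition shift_tail_equiv (a b : gpath) : Prop :=
  exists m n : nat, Nat.iter m shift a = Nat.iter n shift b.

End Graph.

(* Main.v *)
Require Import Defs.
From Stdlib Require Import List Classical ClassicalEpsilon.
Import ListNotations.

Section S.
Context {V Ed : Type} (r s : Ed -> V).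

Definition src (p : @gpath V Ed) : V :=
  match p with
  | PVert v => v
  | PFin e _ => s e
  | PInf f => s (f 0)
  end.

Definition Good (P : V -> Prop) (p : @gpath V Ed) : Prop :=
  P (src p) /\
  match p with
  | PVert _ => True
  | PFin e l => forall x, In x (e :: l) -> P (s x) /\ P (r x)
  | PInf f => forall n, P (s (f n)) /\ P (r (f n))
  end.

Lemma Good_shift P p : Good P p -> Good P (shift r p).
Proof.
  unfold Good; destruct p as [v|e l|f]; simpl; intros [H1 H2].
  - split; auto.
  - destruct l as [|e' l]; simpl.
    + split; auto. apply (H2 e). left; auto.
    + split.
      * apply (H2 e'). right; left; auto.
      * intros x Hx. apply H2. right; auto.
  - split; auto. apply H2.
Qed.

Lemma Good_iter P p n : Good P p -> Good P (Nat.iter n (shift r) p).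
Proof. induction n; simpl; auto. intros; apply Good_shift; auto. Qed.

Lemma last_cons (a d : Ed) l : last (a :: l) d = last l a.
Proof.
  revert a d. induction l as [|x l IH]; intros a d; [reflexivity|].
  change (last (x :: l) d = last (x :: l) a). rewrite !IH. reflexivity.
Qed.

Definition Q (P : V -> Prop) (v : V) := exists p, is_boundary_path r s p /\ Good P p /\ src p = v.

Lemma build (P : V -> Prop) (step : forall v, P v -> regular s v -> exists e, s e = v /\ P (r e)) :
  forall v, P v -> Q P v.
Proof.
  intros v0 Pv0. apply NNPP; intro nQ0.
  assert (key : forall v, P v -> ~ Q P v ->
            exists e, s e = v /\ P (r e) /\ ~ Q P (r e)).
  { intros v Pv nQ.
    assert (Hreg : regular s v).
    { intro Hs. apply nQ. exists (PVert v). split; [exact Hs|]. split; [|reflexivity]. split; [exact Pv|exact I]. }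
    destruct (step v Pv Hreg) as [e [He1 He2]].
    exists e. split; auto. split; auto.
    intros [p [Hb [[Hg1 Hg2] Hsrc]]]. apply nQ.
    unfold Good in *.
    destruct p as [u|e' l|f]; simpl in *.
    - subst u. exists (PFin e []). unfold Good. simpl.
      split; [split; [exact I|exact Hb]|]. split; [|exact He1].
      split; [congruence|]. intros x [Hx|[]]; subst; split; congruence.
    - exists (PFin e (e' :: l)). unfold Good. simpl. destruct Hb as [Hc Hsg].
      split; [split; [split; [congruence|exact Hc]|change (singular s (r (last (e' :: l) e))); rewrite last_cons; exact Hsg]|].
      split; [|exact He1]. split; [congruence|].
      intros x [Hx|Hx]; [subst; split; congruence|]. apply Hg2; auto.
    - exists (PInf (fun n => match n with 0 => e | S k => f k end)). unfold Good. simpl.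
      split; [intros [|n]; [congruence|]; apply Hb|].
      split; [|exact He1]. split; [congruence|].
      intros [|n]; [split; congruence|]; apply Hg2.
  }
  set (T := {v | P v /\ ~ Q P v}).
  pose (E := fun x : T => constructive_indefinite_description _
                (key (proj1_sig x) (proj1 (proj2_sig x)) (proj2 (proj2_sig x)))).
  pose (nxt := fun x : T => exist (fun v => P v /\ ~ Q P v) (r (proj1_sig (E x)))
                 (proj2 (proj2_sig (E x)))).
  pose (x0 := exist (fun v => P v /\ ~ Q P v) v0 (conj Pv0 nQ0) : T).
  pose (xs := fun n => Nat.iter n nxt x0).
  pose (f := fun n => proj1_sig (E (xs n))).
  assert (Hs : forall n, s (f n) = proj1_sig (xs n)).
  { intro n. unfold f. destruct (E (xs n)) as [e [h1 h2]]. simpl. auto. }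
  assert (Hr : forall n, r (f n) = proj1_sig (xs (S n))).
  { intro n. reflexivity. }
  apply nQ0. exists (PInf f). unfold Good. simpl. repeat split.
  - intro n. rewrite Hr, Hs. reflexivity.
  - rewrite Hs. exact (proj1 (proj2_sig (xs 0))).
  - rewrite Hs. exact (proj1 (proj2_sig (xs n))).
  - rewrite Hr. exact (proj1 (proj2_sig (xs (S n)))).
  - rewrite Hs. reflexivity.
Qed.

Lemma src_eq P1 P2 a b m n :
  Good P1 a -> Good P2 b -> Nat.iter m (shift r) a = Nat.iter n (shift r) b ->
  exists x, P1 x /\ P2 x.
Proof.
  intros Ga Gb Heq. pose proof (Good_iter _ _ m Ga) as [A _].
  pose proof (Good_iter _ _ n Gb) as [B _]. rewrite Heq in A. eauto.
Qed.

End S.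

Theorem lemma4p4 (V Ed : Type) (r s : Ed -> V) :
  (forall a b : gpath, is_boundary_path r s a -> is_boundary_path r s b ->
     shift_tail_equiv r a b) ->
  forall H : V -> Prop,
    (exists v, H v) -> hereditary r s H -> saturated r s H ->
    forall v, H v.
Proof.
  intros Hall H [w Hw] Hher Hsat v. apply NNPP; intro Hv.
  assert (QH : Q r s H w).
  { apply build; auto. intros u Hu Hreg.
    apply NNPP; intro C. apply Hreg. left. intros e He. apply C.
    exists e. split; auto. apply Hher. rewrite He; auto. }
  assert (QN : Q r s (fun x => ~ H x) v).
  { apply build; auto. intros u Hu Hreg.
    apply NNPP; intro C. apply Hu. apply Hsat; auto. intros e He.
    apply NNPP; intro C2. apply C. eauto. }
  destruct QH as [a [Ba [Ga _]]]. destruct QN as [b [Bb [Gb _]]].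
  destruct (Hall a b Ba Bb) as [m [n Heq]].
  destruct (src_eq r s _ _ a b m n Ga Gb Heq) as [x [h1 h2]]. auto.
Qed.
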